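(* Let $A$ be an $n\times n$ complex matrix with eigenvalues (counted with algebraic multiplicity) $\lambda_1,\lambda_2,\dots,\lambda_n$. Let $\mathbf{w}_1,\dots,\mathbf{w}_k$ be left eigenvectors of $A$ for the eigenvalues $\lambda_1,\dots,\lambda_k$, respectively. If $\mathbf{x}\in\mathbb{C}^n$ satisfies $\mathbf{w}_j^{*}\mathbf{x}=0$ for $j=2,\dots,k$, then the eigenvalues of $A+\mathbf{x}(\mathbf{w}_1+\cdots+\mathbf{w}_k)^{*}$, counted with multiplicity, are $\lambda_1+\mathbf{w}_1^{*}\mathbf{x},\lambda_2,\dots,\lambda_n$.
   Context: A left eigenvector $\mathbf{w}$ of $A$ for eigenvalue $\lambda$ is a nonzero vector with $\mathbf{w}^{*}A=\lambda\mathbf{w}^{*}$. *)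

(* Defs.v *)
From HB Require Import structures.
From mathcomp Require Import all_boot all_order all_algebra.
Set Implicit Arguments. Unset Strict Implicit. Unset Printing Implicit Defensive.
Import Order.TTheory GRing.Theory Num.Theory.
Local Open Scope ring_scope.

Definition ctrmx (C : numClosedFieldType) (m n : nat) (M : 'M[C]_(m, n)) : 'M[C]_(n, m) :=
  (map_mx Num.conj M)^T.

Definition left_eigenvector (C : numClosedFieldType) (n : nat)
  (A : 'M[C]_n) (l : C) (w : 'cV[C]_n) : Prop :=
  w != 0 /\ ctrmx w *m A = l *: ctrmx w.

(* Main.v *)
From HB Require Import structures.
From mathcomp Require Import all_boot all_order all_algebra.
From mathcomp Require Import ring.
Require Import Defs.
Set Implicit Arguments. Unset Strict Implicit. Unset Printing Implicit Defensive.
Import Order.TTheory GRing.Theory Num.Theory.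
Local Open Scope ring_scope.

Lemma det_rank1 (R : comUnitRingType) n (M : 'M[R]_n) (u : 'cV_n) (r : 'rV_n) :
  GRing.lreg (\det M) ->
  \det (M - u *m r) = \det M - (r *m \adj M *m u) 0 0.
Proof.
move=> dreg.
set d := \det M.
pose D := block_mx (1 : 'M[R]_1) r u M.
have h1 : D = block_mx 1 0 u 1 *m block_mx 1 r 0 (M - u *m r).
  rewrite mulmx_block /D ?mul0mx ?mul1mx ?mulmx1 ?mulmx0 ?addr0 ?add0r.
  by congr block_mx; rewrite addrC subrK.
have h2 : D *m block_mx (d%:M : 'M_1) 0 (- (\adj M *m u)) d%:M
   = block_mx (d%:M - r *m \adj M *m u) (d *: r) 0 (d *: M).
  rewrite mulmx_block /D ?mulmx0 ?addr0 ?mul1mx ?mulmxN. idtac.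
  rewrite !add0r !mulmxA mul_mx_adj !mul_mx_scalar -/d.
  by rewrite mul_scalar_mx subrr.
have e1 : \det D = \det (M - u *m r).
  by rewrite h1 det_mulmx det_lblock det_ublock !det1 !mul1r.
have e2 := congr1 determinant h2.
rewrite det_mulmx det_lblock det_ublock !det_scalar1 detZ -/d in e2.
rewrite det_mx11 !mxE eqxx mulr1n in e2.
rewrite -e1.
have reg : GRing.lreg (d * d ^+ n) by apply: lregM => //; apply: lregX.
apply: reg. rewrite det_scalar in e2.
rewrite mulrC e2 [X in _ = _ * (_ - X)]mxE; ring.
Qed.

Lemma ctrmx_sum (C : numClosedFieldType) n (I : finType) (P : pred I)
  (F : I -> 'cV[C]_n) : ctrmx (\sum_(i | P i) F i) = \sum_(i | P i) ctrmx (F i).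
Proof.
rewrite /ctrmx; apply/matrixP => a b; rewrite !mxE summxE rmorph_sum summxE; apply: eq_bigr => i _.
by rewrite !mxE.
Qed.

Lemma scale_cancel (R : idomainType) m n (a : R) (B B' : 'M[R]_(m, n)) :
  a != 0 -> a *: B = a *: B' -> B = B'.
Proof.
move=> a0 h; apply/matrixP => i j; have := congr1 (fun M : 'M[R]_(m, n) => M i j) h.
rewrite !mxE => /eqP; rewrite -subr_eq0 -mulrBr mulf_eq0 (negbTE a0) /= subr_eq0.
by move/eqP.
Qed.

Theorem theorem3p6 (C : numClosedFieldType) (n k : nat) (A : 'M[C]_n)
  (lam : 'I_n -> C) (w : 'I_n -> 'cV[C]_n) (x : 'cV[C]_n) :
  (0 < k)%N -> (k <= n)%N ->
  char_poly A = \prod_(i < n) ('X - (lam i)%:P) ->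
  (forall i : 'I_n, (i < k)%N -> left_eigenvector A (lam i) (w i)) ->
  (forall j : 'I_n, (0 < j)%N -> (j < k)%N -> ctrmx (w j) *m x = 0) ->
  char_poly (A + x *m ctrmx (\sum_(i < n | (i < k)%N) w i)) =
  \prod_(i < n)
     ('X - (if val i == 0%N
            then lam i + (ctrmx (w i) *m x) 0 0
            else lam i)%:P).
Proof.
move=> k0 kn hA hw hx.
have n0 : (0 < n)%N by apply: leq_trans kn.
pose i0 : 'I_n := Ordinal n0.
pose M := char_poly_mx A.
pose u := map_mx (@polyC C) x.
pose ri i := map_mx (@polyC C) (ctrmx (w i)).
pose q i := \prod_(j < n | j != i) ('X - (lam j)%:P).
pose c := (ctrmx (w i0) *m x) 0 0.
have dM : \det M = char_poly A by [].
have hd : \det M = ('X - (lam i0)%:P) * q i0 by rewrite dM hA (bigD1 i0).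
have hdi i : \det M = ('X - (lam i)%:P) * q i by rewrite dM hA (bigD1 i).
have eqM : char_poly_mx (A + x *m ctrmx (\sum_(i < n | (i < k)%N) w i))
    = M - u *m \sum_(i < n | (i < k)%N) ri i.
  rewrite /char_poly_mx /M /u map_mxD map_mxM ctrmx_sum raddf_sum opprD addrA.
  by [].
have adjri (i : 'I_n) : (i < k)%N -> ri i *m \adj M = q i *: ri i.
  move=> ik; have [_ ev] := hw i ik.
  have riM : ri i *m M = ('X - (lam i)%:P) *: ri i.
    rewrite /M /char_poly_mx mulmxBr mul_mx_scalar /ri -map_mxM ev scalerBl.
    congr (_ - _); apply/matrixP => a b; rewrite !mxE.
    by rewrite rmorphM.
  apply: (@scale_cancel _ _ _ ('X - (lam i)%:P)).
    by rewrite polyXsubC_eq0.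
  by rewrite scalemxAl -riM -mulmxA mul_mx_adj mul_mx_scalar scalerA -hdi.
have sum0 : ((\sum_(i < n | (i < k)%N) ri i) *m \adj M *m u) 0 0 = q i0 * c%:P.
  rewrite mulmx_suml mulmx_suml summxE (bigD1 i0) //= big1 ?addr0.
    rewrite adjri // -scalemxAl /u /ri -map_mxM mxE mxE.
    by [].
  move=> i /andP [ik ni]; rewrite adjri // -scalemxAl /u /ri -map_mxM hx //.
    by rewrite map_mx0 scaler0 mxE.
  by rewrite lt0n; apply: contra ni => /eqP h; apply/eqP/val_inj.
rewrite /char_poly eqM det_rank1; last first.
  by apply/lregP; rewrite dM monic_neq0 // char_poly_monic.
rewrite sum0 hd (bigD1 i0) //= -/c.
have -> : \prod_(i < n | i != i0)
    ('X - (if val i == 0%N then lam i + (ctrmx (w i) *m x) 0 0 else lam i)%:P)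
    = q i0.
  apply: eq_bigr => i ni.
  have -> : (val i == 0%N) = false.
    by apply/negbTE; apply: contra ni => /eqP h; apply/eqP/val_inj.
  by [].
rewrite polyCD; ring.
Qed.
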